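(* For any set of rule schemes $\mathcal{R}\subseteq\{N,H,P,F,wF\}$, every sequent derivable in $i\mathbf{STL}(\mathcal{R})$ is valid in every $\mathbf{K}(\mathcal{R})$-Kripke model.
   Context: Formulas of $\mathcal{L}_\nabla$ are built from variables and constants $1,\top,\bot$ by $\wedge,\vee,\otimes,\to$ and unary $\nabla$. Sequents $\Gamma\Rightarrow A$ have $\Gamma$ a finite sequence; $\nabla\Gamma$ applies $\nabla$ to each member. $\mathbf{STL}$ has axioms $A\Rightarrow A$, $\Rightarrow1$, $\nabla1\Rightarrow1$, $\Gamma\Rightarrow\top$, $\Gamma,\bot,\Sigma\Rightarrow A$ and rules (premises / conclusion): cut: $\Gamma\Rightarrow A$, $\Pi,A,\Sigma\Rightarrow B$ / $\Pi,\Gamma,\Sigma\Rightarrow B$; $L\wedge$: $\Gamma,A,\Sigma\Rightarrow C$ / $\Gamma,A\wedge B,\Sigma\Rightarrow C$ and $\Gamma,B,\Sigma\Rightarrow C$ / $\Gamma,A\wedge B,\Sigma\Rightarrow C$; $R\wedge$: $\Gamma\Rightarrow A$, $\Gamma\Rightarrow B$ / $\Gamma\Rightarrow A\wedge B$; $L\vee$: $\Gamma,A,\Sigma\Rightarrow C$, $\Gamma,B,\Sigma\Rightarrow C$ / $\Gamma,A\vee B,\Sigma\Rightarrow C$; $R\vee$: $\Gamma\Rightarrow A$ / $\Gamma\Rightarrow A\vee B$ and $\Gamma\Rightarrow B$ / $\Gamma\Rightarrow A\vee B$; $L1$: $\Gamma,\Sigma\Rightarrow A$ / $\Gamma,1,\Sigma\Rightarrow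 A$; $L\otimes$: $\Gamma,A,B,\Sigma\Rightarrow C$ / $\Gamma,A\otimes B,\Sigma\Rightarrow C$; $R\otimes$: $\Gamma\Rightarrow A$, $\Sigma\Rightarrow B$ / $\Gamma,\Sigma\Rightarrow A\otimes B$; $(\nabla)$: $A\Rightarrow B$ / $\nabla A\Rightarrow\nabla B$; Oplax: $\nabla A,\nabla B\Rightarrow C$ / $\nabla(A\otimes B)\Rightarrow C$; $L\to$: $\Gamma\Rightarrow A$, $\Pi,B,\Sigma\Rightarrow C$ / $\Pi,\Gamma,\nabla(A\to B),\Sigma\Rightarrow C$; $R\to$: $A,\nabla\Gamma\Rightarrow B$ / $\Gamma\Rightarrow A\to B$. Schemes: $(N)$: $\Gamma\Rightarrow A$ / $\nabla\Gamma\Rightarrow\nabla A$; $(P)$: $\Gamma\Rightarrow\nabla A$ / $\Gamma\Rightarrow A$; $(F)$: $\Gamma\Rightarrow A$ / $\Gamma\Rightarrow\nabla A$; $(wF)$: $\nabla A\Rightarrow\bot$ / $A\Rightarrow\bot$; $(H)$: $\Gamma,A_1\to B_1,\dots,A_n\to B_n\Rightarrow C$ / $\nabla\Gamma,\nabla A_1\to\nabla B_1,\dots,\nabla A_n\to\nabla B_n\Rightarrow\nabla C$. $i\mathbf{STL}(\mathcal{R})$ is $\mathbf{STL}$ plus the schemes in $\mathcal{R}$ plus left weakening, contraction and exchange. A Kripke model is $(W,\le,R,V)$: $(W,\le)$ a poset, $R\subseteq W\times W$ with $(u,v)\in R$, $u'\le u$, $v\le v'$ implying $(u',v')\in R$,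 and $V$ assigning an upset of $(W,\le)$ to each variable. Forcing: $w\Vdash p$ iff $w\in V(p)$; $w\Vdash\top$ and $w\Vdash1$ always; never $w\Vdash\bot$; $w\Vdash A\wedge B$ and $w\Vdash A\otimes B$ iff $w\Vdash A$ and $w\Vdash B$; $w\Vdash A\vee B$ iff $w\Vdash A$ or $w\Vdash B$; $w\Vdash A\to B$ iff for all $v$ with $(w,v)\in R$, $v\Vdash A$ implies $v\Vdash B$; $w\Vdash\nabla A$ iff there is $v$ with $(v,w)\in R$ and $v\Vdash A$. $\Gamma\Rightarrow A$ is valid if every $w$ forcing all members of $\Gamma$ forces $A$. A $\mathbf{K}(\mathcal{R})$-Kripke model satisfies the conditions for each scheme in $\mathcal{R}$: $(N)$: there is an order-preserving $\pi:W\to W$ with $(u,v)\in R$ iff $u\le\pi(v)$; $(H)$: such a $\pi$ exists and is an order isomorphism; $(P)$: $R\subseteq\le$; $(F)$: $R$ reflexive; $(wF)$: $R$ serial. *)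

(* Defs.v *)
From Stdlib Require Import List.
Import ListNotations.

Inductive form : Type :=
| Var : nat -> form
| One : form
| Top : form
| Bot : form
| And : form -> form -> form
| Or : form -> form -> form
| Tens : form -> form -> form
| Imp : form -> form -> form
| Nab : form -> form.

Definition nabla_ctx (G : list form) : list form := map Nab G.

Inductive scheme : Type := SN | SH | SP | SF | SwF.

Inductive derivable (Rs : scheme -> Prop) : list form -> form -> Prop :=
| ax_id : forall A, derivable Rs [A] A
| ax_one : derivable Rs [] One
| ax_nab_one : derivable Rs [Nab One] One
| ax_top : forall G, derivable Rs G Top
| ax_bot : forall G S A, derivable Rs (G ++ Bot :: S) A
| r_cut : forall G P S A B,
    derivable Rs G A -> derivable Rs (P ++ A :: S) B ->
    derivable Rs (P ++ G ++ S) B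
| r_and_l1 : forall G S A B C,
    derivable Rs (G ++ A :: S) C -> derivable Rs (G ++ And A B :: S) C
| r_and_l2 : forall G S A B C,
    derivable Rs (G ++ B :: S) C -> derivable Rs (G ++ And A B :: S) C
| r_and_r : forall G A B,
    derivable Rs G A -> derivable Rs G B -> derivable Rs G (And A B)
| r_or_l : forall G S A B C,
    derivable Rs (G ++ A :: S) C -> derivable Rs (G ++ B :: S) C ->
    derivable Rs (G ++ Or A B :: S) C
| r_or_r1 : forall G A B, derivable Rs G A -> derivable Rs G (Or A B)
| r_or_r2 : forall G A B, derivable Rs G B -> derivable Rs G (Or A B)
| r_one_l : forall G S A,
    derivable Rs (G ++ S) A -> derivable Rs (G ++ One :: S) A
| r_tens_l : forall G S A B C,
    derivable Rs (G ++ A :: B :: S) C -> derivable Rs (G ++ Tens A B :: S) C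
| r_tens_r : forall G S A B,
    derivable Rs G A -> derivable Rs S B -> derivable Rs (G ++ S) (Tens A B)
| r_nab : forall A B, derivable Rs [A] B -> derivable Rs [Nab A] (Nab B)
| r_oplax : forall A B C,
    derivable Rs [Nab A; Nab B] C -> derivable Rs [Nab (Tens A B)] C
| r_imp_l : forall G P S A B C,
    derivable Rs G A -> derivable Rs (P ++ B :: S) C ->
    derivable Rs (P ++ G ++ Nab (Imp A B) :: S) C
| r_imp_r : forall G A B,
    derivable Rs (A :: nabla_ctx G) B -> derivable Rs G (Imp A B)
| r_N : Rs SN -> forall G A,
    derivable Rs G A -> derivable Rs (nabla_ctx G) (Nab A)
| r_P : Rs SP -> forall G A, derivable Rs G (Nab A) -> derivable Rs G A
| r_F : Rs SF -> forall G A, derivable Rs G A -> derivable Rs G (Nab A)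
| r_wF : Rs SwF -> forall A, derivable Rs [Nab A] Bot -> derivable Rs [A] Bot
| r_H : Rs SH -> forall G (l : list (form * form)) C,
    derivable Rs (G ++ map (fun p => Imp (fst p) (snd p)) l) C ->
    derivable Rs (nabla_ctx G ++ map (fun p => Imp (Nab (fst p)) (Nab (snd p))) l)
              (Nab C)
| r_weak : forall G S B A,
    derivable Rs (G ++ S) A -> derivable Rs (G ++ B :: S) A
| r_contr : forall G S B A,
    derivable Rs (G ++ B :: B :: S) A -> derivable Rs (G ++ B :: S) A
| r_exch : forall G S B D A,
    derivable Rs (G ++ B :: D :: S) A -> derivable Rs (G ++ D :: B :: S) A.

Record kmodel : Type := KModel {
  W : Type;
  le : W -> W -> Prop;
  le_refl : forall u, le u u;
  le_trans : forall u v w, le u v -> le v w -> le u w;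
  le_antisym : forall u v, le u v -> le v u -> u = v;
  Rel : W -> W -> Prop;
  Rel_mono : forall u v u' v', Rel u v -> le u' u -> le v v' -> Rel u' v';
  V : nat -> W -> Prop;
  V_up : forall p u v, V p u -> le u v -> V p v
}.

Fixpoint forces (M : kmodel) (w : W M) (A : form) : Prop :=
  match A with
  | Var p => V M p w
  | One => True
  | Top => True
  | Bot => False
  | And B C => forces M w B /\ forces M w C
  | Or B C => forces M w B \/ forces M w C
  | Tens B C => forces M w B /\ forces M w C
  | Imp B C => forall v, Rel M w v -> forces M v B -> forces M v C
  | Nab B => exists v, Rel M v w /\ forces M v B
  end.

Definition valid (M : kmodel) (G : list form) (A : form) : Prop :=
  forall w : W M, (forall B, In B G -> forces M w B) -> forces M w A.

Definition order_preserving (M : kmodel) (f : W M -> W M) : Prop :=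
  forall u v, le M u v -> le M (f u) (f v).

Definition order_iso (M : kmodel) (f : W M -> W M) : Prop :=
  (forall u v, le M u v <-> le M (f u) (f v)) /\ (forall v, exists u, f u = v).

Definition scheme_cond (M : kmodel) (s : scheme) : Prop :=
  match s with
  | SN => exists pi : W M -> W M, order_preserving M pi /\
            forall u v, Rel M u v <-> le M u (pi v)
  | SH => exists pi : W M -> W M, order_preserving M pi /\ order_iso M pi /\
            forall u v, Rel M u v <-> le M u (pi v)
  | SP => forall u v, Rel M u v -> le M u v
  | SF => forall u, Rel M u u
  | SwF => forall u, exists v, Rel M u v
  end.

Definition K_model (Rs : scheme -> Prop) (M : kmodel) : Prop :=
  forall s, Rs s -> scheme_cond M s.

(* Main.v *)
Require Import Defs.
From Stdlib Require Import List.
Import ListNotations.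

Lemma persist (M : kmodel) : forall A (u v : W M), forces M u A -> le M u v -> forces M v A.
Proof.
  induction A; simpl; intros u v H Hle; try tauto.
  - eapply V_up; eauto.
  - destruct H; split; eauto.
  - destruct H; [left|right]; eauto.
  - destruct H; split; eauto.
  - intros x Hx Hf. apply (H x); auto. eapply Rel_mono; eauto. apply le_refl.
  - destruct H as [x [Hx Hf]]. exists x; split; auto. eapply Rel_mono; eauto. apply le_refl.
Qed.

Ltac ctx := repeat (first [ rewrite in_app_iff in * | progress simpl in * ]).

Theorem theorem8p5 :
  forall (Rs : scheme -> Prop) (G : list form) (A : form),
    derivable Rs G A ->
    forall M : kmodel, K_model Rs M -> valid M G A.
Proof.
  intros Rs G0 A0 D M KM.
  unfold valid.
  induction D as [| | | | | | | | | | | | | | | | | | |r G A D IHD|r G A D IHD|r G A D IHD|r A D IHD|r G l C D IHD| | |]; intros w Hw; simpl in *.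
  - apply Hw; simpl; auto.
  - auto.
  - auto.
  - auto.
  - exfalso. apply (Hw Bot). ctx; auto.
  - apply IHD2. intros Z HX. ctx. destruct HX as [HX|[HX|HX]].
    + apply Hw; ctx; auto.
    + subst Z. apply IHD1. intros Y HY; apply Hw; ctx; auto.
    + apply Hw; ctx; auto.
  - apply IHD. intros Z HX. ctx. destruct HX as [HX|[HX|HX]].
    + apply Hw; ctx; auto.
    + subst Z. apply (Hw (And A B)); ctx; auto.
    + apply Hw; ctx; auto.
  - apply IHD. intros Z HX. ctx. destruct HX as [HX|[HX|HX]].
    + apply Hw; ctx; auto.
    + subst Z. apply (Hw (And A B)); ctx; auto.
    + apply Hw; ctx; auto.
  - split; auto.
  - destruct (Hw (Or A B)) as [HA|HB]; [ctx; auto| |].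
    + apply IHD1. intros Z HX. ctx. destruct HX as [HX|[HX|HX]].
      * apply Hw; ctx; auto.
      * subst Z; auto.
      * apply Hw; ctx; auto.
    + apply IHD2. intros Z HX. ctx. destruct HX as [HX|[HX|HX]].
      * apply Hw; ctx; auto.
      * subst Z; auto.
      * apply Hw; ctx; auto.
  - left; auto.
  - right; auto.
  - apply IHD. intros Z HX. ctx. destruct HX as [HX|HX]; apply Hw; ctx; auto.
  - destruct (Hw (Tens A B)) as [HA HB]; [ctx; auto|].
    apply IHD. intros Z HX. ctx. destruct HX as [HX|[HX|[HX|HX]]].
    + apply Hw; ctx; auto.
    + subst Z; auto.
    + subst Z; auto.
    + apply Hw; ctx; auto.
  - split; [apply IHD1|apply IHD2]; intros Z HX; apply Hw; ctx; auto.
  - destruct (Hw (Nab A)) as [v [Hv HA]]; auto.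
    exists v; split; auto. apply IHD. intros Z [HX|[]]; subst Z; auto.
  - destruct (Hw (Nab (Tens A B))) as [v [Hv [HA HB]]]; auto.
    apply IHD. intros Z [HX|[HX|[]]]; subst Z; simpl; exists v; auto.
  - destruct (Hw (Nab (Imp A B))) as [v [Hv HI]]; [ctx; auto|].
    assert (HA : forces M w A) by (apply IHD1; intros Z HX; apply Hw; ctx; auto).
    apply IHD2. intros Z HX. ctx. destruct HX as [HX|[HX|HX]].
    + apply Hw; ctx; auto.
    + subst Z. apply (HI w Hv HA).
    + apply Hw; ctx; auto.
  - intros v Hv HA. apply IHD. intros Z [HX|HX].
    + subst Z; auto.
    + unfold nabla_ctx in HX. apply in_map_iff in HX. destruct HX as [Y [HY HYG]].
      subst Z. simpl. exists w; auto.
  -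
    destruct (KM SN r) as [pi [Hpi HR]].
    exists (pi w). split; [apply HR; apply le_refl|].
    apply IHD. intros Z HX.
    destruct (Hw (Nab Z)) as [v [Hv HX']].
    { unfold nabla_ctx. apply in_map_iff. eauto. }
    eapply persist; eauto. apply HR; auto.
  - pose proof (KM SP r) as HP.
    destruct (IHD w Hw) as [v [Hv HA]]. eapply persist; eauto.
  - pose proof (KM SF r) as HF. exists w; split; auto.
  - pose proof (KM SwF r) as HS. destruct (HS w) as [v Hv].
    apply (IHD v). intros Z [HX|[]]; subst Z; simpl. exists w; split; auto; apply Hw; simpl; auto.
  -
    destruct (KM SH r) as [pi [Hpi [[Hiso Hsurj] HR]]].
    exists (pi w). split; [apply HR; apply le_refl|].
    apply IHD. intros Z HX. ctx. destruct HX as [HX|HX].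
    + destruct (Hw (Nab Z)) as [v [Hv HX']].
      { ctx. left. unfold nabla_ctx. apply in_map_iff. eauto. }
      eapply persist; eauto. apply HR; auto.
    + apply in_map_iff in HX. destruct HX as [[a b] [HX Hab]]. simpl in HX. subst Z.
      simpl. intros v Hv Ha.
      apply HR in Hv. apply Hiso in Hv.
      destruct (Hsurj v) as [v' Hv'].
      assert (Hw' : forces M w (Imp (Nab a) (Nab b))).
      { apply Hw. ctx. right. apply in_map_iff. exists (a, b); auto. }
      simpl in Hw'.
      destruct (Hw' v') as [x [Hx Hb]].
      * apply HR. rewrite Hv'. auto.
      * exists v. split; auto. apply HR. rewrite Hv'. apply le_refl.
      * eapply persist; eauto. apply HR in Hx. rewrite Hv' in Hx. auto.
  - apply IHD. intros Z HX. apply Hw. ctx. tauto.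
  - apply IHD. intros Z HX. apply Hw. ctx. tauto.
  - apply IHD. intros Z HX. apply Hw. ctx. tauto.
Qed.
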